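(* For every integer $n\ge1$ there exist three real polynomials $a_1(X)$, $a_2(X)$ and $b(X)$ of degree $n$ such that (i) all the roots of $a_1$, $a_2$, $b$ and $a_1b+a_2$ are real, and (ii) all the roots of $a_2$ and of $a_1b+a_2$ are smaller than all the roots of $b$. *)

(* Defs.v *)
From mathcomp Require Import all_boot all_order all_algebra.
From mathcomp Require Import reals.
Set Implicit Arguments. Unset Strict Implicit. Unset Printing Implicit Defensive.
Import Order.TTheory GRing.Theory Num.Theory.
Local Open Scope ring_scope.

Definition real_rooted (R : realType) (p : {poly R}) : Prop :=
  exists s : seq R, p = lead_coef p *: \prod_(x <- s) ('X - x%:P).

(* Main.v *)
Require Import Defs.
From mathcomp Require Import all_boot all_order all_algebra.
From mathcomp Require Import reals.
From mathcomp Require Import zify ring lra.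
Import Order.TTheory GRing.Theory Num.Theory.
Local Open Scope ring_scope.

Section Aux.
Variable R : realType.

Lemma alt_real_rooted (f : {poly R}) (N : nat) (y : nat -> R) :
  size f = N.+1 ->
  (forall j, (j < N)%N -> y j.+1 < y j) ->
  (forall j, (j <= N)%N -> 0 < (-1) ^+ j * f.[y j]) ->
  real_rooted f.
Proof.
move=> sf ydec ysg.
have step : forall m, (m <= N)%N -> exists rs : seq R,
   [/\ size rs = m, all (root f) rs, uniq rs & all (fun x => y m < x) rs].
  elim=> [|m IH] hm; first by exists [::].
  have [rs [s1 s2 s3 s4]] := IH (ltnW hm).
  have hy := ydec m hm.
  have h1 := ysg m (ltnW hm).
  have h2 := ysg m.+1 hm.
  have [x /andP[xl xr] rx] : exists2 x, y m.+1 <= x <= y m & root f x.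
    case: (boolP (odd m)) => om.
    - move: h1 h2; rewrite exprS -signr_odd om /= !mulN1r !mulNr !opprK.
      rewrite mul1r oppr_gt0 => h1 h2.
      have [x hx rx] : exists2 x, y m.+1 <= x <= y m & root (- f) x.
        apply: poly_ivt; first exact: ltW.
        by rewrite !hornerN oppr_le0 oppr_ge0 (ltW h1) (ltW h2).
      by exists x => //; move: rx; rewrite /root hornerN oppr_eq0.
    - move: h1 h2; rewrite exprS -signr_odd (negbTE om) /= !mul1r expr0.
      rewrite mulr1 mulN1r oppr_gt0 => h1 h2.
      by apply: poly_ivt; [exact: ltW | rewrite (ltW h1) (ltW h2)].
  have xl' : y m.+1 < x.
    rewrite lt_neqAle xl andbT; apply/negP => /eqP E.
    move: rx; rewrite /root -E => /eqP E2; move: h2; rewrite E2 mulr0 ltxx //.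
  have xr' : x < y m.
    rewrite lt_neqAle xr andbT; apply/negP => /eqP E.
    move: rx; rewrite /root E => /eqP E2; move: h1; rewrite E2 mulr0 ltxx //.
  exists (x :: rs); split => //=.
  - by rewrite s1.
  - by rewrite rx s2.
  - rewrite s3 andbT; apply/negP => xin.
    by move/allP: s4 => /(_ x xin); rewrite ltNge (ltW xr').
  - rewrite xl' /=; apply/allP => z zin.
    by move/allP: s4 => /(_ z zin) hz; exact: lt_trans hy hz.
have [rs [s1 s2 s3 _]] := step N (leqnn N).
exists rs; apply: all_roots_prod_XsubC => //.
  by rewrite sf s1.
by rewrite uniq_rootsE.
Qed.

Definition kp (Q : R) (s N : nat) (w : nat -> R) : {poly R} :=
  \poly_(i < N.+1) (w i / Q ^+ ((i + s) ^ 2)).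

Lemma kp_size Q s N w : 0 < Q -> (forall i, 1 <= w i) -> size (kp Q s N w) = N.+1.
Proof.
move=> Q0 w1; rewrite /kp size_poly_eq //= mulf_neq0 //.
  by apply: lt0r_neq0; apply: lt_le_trans (w1 N).
by rewrite invr_eq0 expf_neq0 // lt0r_neq0.
Qed.

Lemma kp_pos Q s N w x : 0 < Q -> (forall i, 1 <= w i) -> 0 <= x ->
  0 < (kp Q s N w).[x].
Proof.
move=> Q0 w1 x0; rewrite /kp horner_poly (bigD1 ord0) //=.
have wp : forall i, 0 < w i by move=> i; apply: lt_le_trans (w1 i).
have A : 0 < w 0%N / Q ^+ ((0 + s) ^ 2) * x ^+ 0.
  by rewrite expr0 mulr1 divr_gt0 ?exprn_gt0.
apply: (lt_le_trans A); rewrite lerDl.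
apply: sumr_ge0 => i _; apply: mulr_ge0; last exact: exprn_ge0.
by rewrite divr_ge0 ?exprn_ge0 ?ltW.
Qed.

Lemma exp_ineq (q i j s : nat) : i != j ->
  (2 * (j + s) * i + 1 + (j + s) ^ 2 <= 2 * (j + s) * j + (i + s) ^ 2)%N.
Proof.
move=> ij; have : (i < j)%N \/ (j < i)%N.
  by case: ltngtP ij => // _ _; [left|right].
case=> h; nia.
Qed.

Lemma kp_sign q s N w j : (2 * N.+1 < q)%N -> (forall i, 1 <= w i <= 2) ->
  (j <= N)%N ->
  0 < (-1) ^+ j * (kp q%:R s N w).[- (q%:R ^+ (2 * (j + s)))].
Proof.
move=> hq hw hj.
set Q : R := q%:R.
have Q1 : 1 < Q by rewrite /Q ltr1n; lia.
have Q0 : 0 < Q by apply: lt_trans Q1.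
set a := (2 * (j + s))%N.
set T := fun i : nat => Q ^+ (a * i) / Q ^+ ((i + s) ^ 2).
have Tp : forall i, 0 < T i by move=> i; rewrite /T divr_gt0 ?exprn_gt0.
have termE : forall i : nat, (-1) ^+ j * (w i / Q ^+ ((i + s) ^ 2) * (- Q ^+ a) ^+ i)
    = (-1) ^+ (i + j) * w i * T i.
  move=> i; rewrite /T -[- Q ^+ a]mulN1r exprMn -exprM exprD; ring.
have Tb : forall i : nat, i != j -> T i <= T j / Q.
  move=> i ij; rewrite ler_pdivlMr // /T mulrAC -exprSr ler_pdivrMr ?exprn_gt0 //.
  rewrite mulrAC ler_pdivlMr ?exprn_gt0 // -!exprD ler_eXn2l //.
  rewrite /a; move: (exp_ineq 0 i j s ij); lia.
rewrite /kp horner_poly mulr_sumr.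
under eq_bigr => i _ do rewrite termE.
have jN : (j < N.+1)%N by [].
rewrite (bigD1 (Ordinal jN)) //=.
have -> : (-1) ^+ (j + j) = 1 :> R by rewrite -signr_odd addnn odd_double.
set M := T j.
have lb : forall i : 'I_N.+1, i != Ordinal jN ->
    - (2 * (M / Q)) <= (-1) ^+ (i + j) * w i * T i.
  move=> i ij.
  have ij' : (i : nat) != j by apply: contra ij => /eqP E; apply/eqP/val_inj.
  have wTb : w i * T i <= 2 * (M / Q).
    have := hw i => /andP[w1 w2].
    apply: ler_pM => //; [apply: le_trans w1 => // | exact: ltW | exact: Tb].
  have wT0 : 0 <= w i * T i.
    have := hw i => /andP[w1 w2]; apply: mulr_ge0; [exact: le_trans w1 | exact: ltW].
  rewrite -signr_odd; case: (odd _) => /=; rewrite ?expr1 ?expr0 ?mul1r ?mulN1r.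
    by rewrite mulNr lerN2.
  by apply: (le_trans _ wT0); rewrite oppr_le0; exact: (le_trans wT0 wTb).
have S1 : \sum_(i < N.+1 | i != Ordinal jN) - (2 * (M / Q))
    <= \sum_(i < N.+1 | i != Ordinal jN) (-1) ^+ (i + j) * w i * T i.
  by apply: ler_sum => i; exact: lb.
have S2 : \sum_(i < N.+1) - (2 * (M / Q))
    <= \sum_(i < N.+1 | i != Ordinal jN) - (2 * (M / Q)).
  rewrite (bigD1 (Ordinal jN)) //= gerDr oppr_le0; apply: mulr_ge0 => //.
  by apply: divr_ge0; apply: ltW; [exact: Tp | exact: Q0].
have S3 : \sum_(i < N.+1) - (2 * (M / Q)) = - (2 * (M / Q)) * N.+1%:R.
  by rewrite sumr_const card_ord mulr_natr.
have hw1 : 1 <= w j by have := hw j => /andP[].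
have Mp : 0 < M := Tp j.
have key : 2 * (M / Q) * N.+1%:R < M.
  have -> : 2 * (M / Q) * N.+1%:R = M * (2 * N.+1%:R / Q) by ring.
  rewrite -[X in _ < X]mulr1 ltr_pM2l // ltr_pdivrMr // mul1r.
  by rewrite /Q -natrM ltr_nat.
have h : M <= 1 * w j * M by rewrite mul1r ler_peMl // ltW.
have H0 : 0 < M + (- (2 * (M / Q))) * N.+1%:R by rewrite mulNr subr_gt0.
rewrite -S3 in H0; exact: (lt_le_trans H0 (lerD h (le_trans S2 S1))).
Qed.

Lemma kp_real_rooted q s N w : (2 * N.+1 < q)%N -> (forall i, 1 <= w i <= 2) ->
  real_rooted (kp q%:R s N w).
Proof.
move=> hq hw.
have Q1 : 1 < q%:R :> R by rewrite ltr1n; lia.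
apply: (@alt_real_rooted _ N (fun j => - (q%:R ^+ (2 * (j + s))))).
- apply: kp_size; first exact: lt_trans Q1.
  by move=> i; have /andP[] := hw i.
- move=> j _; rewrite ltrN2 ltr_eXn2l //; lia.
- by move=> j hj; apply: kp_sign.
Qed.

Lemma Xn_real_rooted n : real_rooted ('X^n : {poly R}).
Proof.
exists (nseq n 0); rewrite lead_coefXn scale1r.
elim: n => [|n IH]; first by rewrite big_nil expr0.
by rewrite /= big_cons -IH subr0 exprS.
Qed.

End Aux.
Arguments kp {R}.

Theorem corollary5p2 (R : realType) (n : nat) (hn : (1 <= n)%N) :
  exists a1 a2 b : {poly R},
    [/\ size a1 = n.+1, size a2 = n.+1, size b = n.+1,
        [/\ real_rooted a1, real_rooted a2, real_rooted b
          & real_rooted (a1 * b + a2)] &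
        forall x y : R, root b y ->
          (root a2 x \/ root (a1 * b + a2) x) -> x < y].
Proof.
set q := (8 * n + 8)%N.
set Q : R := q%:R.
have Q0 : 0 < Q by rewrite /Q ltr0n /q; lia.
have w1 : forall i : nat, 1 <= (fun _ : nat => 1 : R) i by move=> i; rewrite lexx.
have w12 : forall i : nat, 1 <= (fun _ : nat => 1 : R) i <= 2.
  by move=> i; rewrite lexx /= ler1n.
set wP := fun i : nat => (if i == n then 2 else 1) : R.
have wP12 : forall i, 1 <= wP i <= 2.
  by move=> i; rewrite /wP; case: (i == n); rewrite ?lexx ?ler1n.
have wP1 : forall i, 1 <= wP i by move=> i; have /andP[] := wP12 i.
have PE : kp Q n n (fun _ => 1) * 'X^n + kp Q 0 n (fun _ => 1) = kp Q 0 (2 * n) wP.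
  apply/polyP => i; rewrite coefD coefMXn !coef_poly /wP.
  case: (ltngtP i n) => hi.
  - have -> : (i < n.+1)%N by lia.
    have -> : (i < (2 * n).+1)%N by lia.
    by rewrite add0r.
  - have -> : (i < n.+1)%N = false by lia.
    rewrite subnK; last lia.
    have -> : (i - n < n.+1)%N = (i < (2 * n).+1)%N by lia.
    by rewrite addr0 addn0.
  - rewrite hi subnn.
    have -> : (0 < n.+1)%N by lia.
    have -> : (n < n.+1)%N by lia.
    have -> : (n < (2 * n).+1)%N by lia.
    by rewrite add0n addn0 -mulrDl.
have neg : forall f : {poly R}, (exists s N w, f = kp Q s N w /\ forall i, 1 <= w i) ->
    forall x, root f x -> x < 0.
  move=> f [s [N [w [-> hw]]]] x rx; rewrite ltNge; apply/negP => x0.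
  by move: rx; rewrite /root gt_eqF // kp_pos.
exists (kp Q n n (fun _ => 1)), (kp Q 0 n (fun _ => 1)), 'X^n; split.
- exact: kp_size.
- exact: kp_size.
- exact: size_polyXn.
- split.
  + by apply: kp_real_rooted => //; rewrite /q; lia.
  + by apply: kp_real_rooted => //; rewrite /q; lia.
  + exact: Xn_real_rooted.
  + by rewrite PE; apply: kp_real_rooted => //; rewrite /q; lia.
- move=> x y; rewrite /root hornerXn expf_eq0 => /andP[_ /eqP ->].
  case=> rx.
    by apply: (neg (kp Q 0 n (fun _ => 1))) => //; exists 0%N, n, (fun _ => 1).
  by move: rx; rewrite PE; apply: neg; exists 0%N, (2 * n)%N, wP.
Qed.
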